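(* Let $G$ be a finite group with $R(G) \neq 1$. Then $|\mathrm{Solv}(G)| = |\mathrm{Solv}(G/R(G))|$.
   Context: $R(G)$ denotes the solvable radical of $G$, the largest solvable normal subgroup of $G$. For a finite group $G$ and $x \in G$, the solvabilizer of $x$ in $G$ is $\mathrm{Sol}_G(x) = \{y \in G : \langle x, y \rangle \text{ is solvable}\}$. $\mathrm{Solv}(G) = \{\mathrm{Sol}_G(x) : x \in G\}$ is the set of distinct solvabilizers of elements of $G$. *)

(* Defs.v *)
From mathcomp Require Import all_boot all_fingroup all_solvable.
Set Implicit Arguments. Unset Strict Implicit. Unset Printing Implicit Defensive.
Local Open Scope group_scope.

Definition solrad (gT : finGroupType) (G : {set gT}) : {set gT} :=
  <<\bigcup_(H : {group gT} | (H <| G) && solvable H) H>>.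

Definition solvabilizer (gT : finGroupType) (G : {set gT}) (x : gT) : {set gT} :=
  [set y in G | solvable <<[set x; y]>>].

Definition Solv (gT : finGroupType) (G : {set gT}) : {set {set gT}} :=
  [set solvabilizer G x | x in G].

(* Main.v *)
Require Import Defs.
From mathcomp Require Import all_boot all_fingroup all_solvable.
Local Open Scope group_scope.

Lemma solrad_max (gT : finGroupType) (G : {group gT}) :
  {M : {group gT} | [/\ M <| G, solvable M & solrad G = M]}.
Proof.
pose P := fun H : {group gT} => (H <| G) && solvable H.
have [M /maxgroupP [/andP [nMG solM] maxM]] : {M : {group gT} | maxgroup M P}.
  by apply: ex_maxgroup; exists 1%G; rewrite /P normal1 solvable1.
have subM : forall H : {group gT}, H <| G -> solvable H -> H \subset M.
  move=> H nHG solH.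
  have PHM : P (H <*> M)%G.
    apply/andP; split; first exact: normalY.
    have nMHM : M <| (H <*> M)%G.
      rewrite normalYr; apply: subset_trans (normal_sub nHG) (normal_norm nMG).
    rewrite (series_sol nMHM) solM /= quotientYidr ?quotient_sol //.
    exact: subset_trans (normal_sub nHG) (normal_norm nMG).
  have := maxM _ PHM (joing_subr _ _) => /= EHM.
  by rewrite -EHM joing_subl.
exists M; split=> //.
apply/eqP; rewrite eqEsubset; apply/andP; split.
  rewrite /solrad gen_subG; apply/bigcupsP => H /andP [nHG solH].
  exact: subM.
rewrite /solrad; apply: sub_gen.
apply/subsetP => z Mz; apply/bigcupP; exists M => //=; by rewrite nMG solM.
Qed.

Lemma key (gT : finGroupType) (G R : {group gT}) :
  R <| G -> solvable R -> forall x y, x \in G -> y \in G ->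
  solvable <<[set x; y]>> = solvable <<[set coset R x; coset R y]>>.
Proof.
move=> nRG solR x y xG yG.
have sxyG : [set x; y] \subset G by rewrite subUset !sub1set xG yG.
have KG : <<[set x; y]>> \subset G by rewrite gen_subG.
have KN : <<[set x; y]>> \subset 'N(R) := subset_trans KG (normal_norm nRG).
have xN : x \in 'N(R) by apply: (subsetP (normal_norm nRG)).
have yN : y \in 'N(R) by apply: (subsetP (normal_norm nRG)).
have -> : <<[set coset R x; coset R y]>> = (<<[set x; y]>>%G / R).
  rewrite /= /quotient morphim_gen; last exact: subset_trans sxyG (normal_norm nRG).
  by rewrite morphimU !morphim_set1.
apply/idP/idP; first exact: quotient_sol.
move=> solKR.
have : solvable (<<[set x; y]>>%G <*> R)%G.
  by rewrite (series_sol (H := R)) ?normalYr // solR quotientYidr.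
by apply: solvableS; apply: joing_subl.
Qed.

Theorem lemma2p6 (gT : finGroupType) (G : {group gT}) :
  solrad G != 1 ->
  #|Solv G| = #|Solv (G / solrad G)|.
Proof.
move=> _; have [R [nRG solR ->]] := solrad_max _ G.
have memS : forall x, x \in G -> forall y, (y \in solvabilizer G x) =
    (y \in G) && (coset R y \in solvabilizer (G / R) (coset R x)).
  move=> x xG y; rewrite !inE; case yG: (y \in G) => //=.
  by rewrite mem_quotient //= (@key _ _ _ nRG solR).
have imS : forall x, x \in G ->
    coset R @: solvabilizer G x = solvabilizer (G / R) (coset R x).
  move=> x xG; apply/setP => u; apply/imsetP/idP.
    by case=> y; rewrite memS // => /andP[yG yS] ->.
  move=> uS; have : u \in G / R by move: uS; rewrite inE => /andP[].
  rewrite /quotient morphimEsub ?normal_norm //.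
  case/imsetP => y yG Eu; exists y => //.
  by rewrite memS // yG -Eu.
have -> : Solv (G / R) = [set coset R @: S | S : {set gT} in Solv G].
  rewrite /Solv /quotient morphimEsub ?normal_norm // -!imset_comp.
  apply: eq_in_imset => x xG /=; rewrite imS // /quotient morphimEsub ?normal_norm //.
apply/esym; rewrite card_in_imset //.
move=> S1 S2 /imsetP[x1 x1G ->] /imsetP[x2 x2G ->]; rewrite !imS // => E.
by apply/setP => y; rewrite !memS // E.
Qed.
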